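(* Let Assumptions (A1), (A2) and (A3) from the context hold, and consider the event-triggered robust dynamic average consensus scheme described in the context, with the dynamic triggering law. Then no agent exhibits Zeno behavior. That is, for every agent $i$ there is no finite $T_0$ with $\lim_{k\to\infty}t^i_k=T_0$, so agent $i$ triggers only finitely many events in any bounded time interval.
   Context: There are $n$ agents over a connected undirected graph. Each undirected edge is regarded as two directed edges $e_1,\dots,e_\ell$. The incidence matrix $B\in\{-1,0,1\}^{n\times\ell}$ has $b_{ij}=-1$ if $e_j$ leaves $v_i$, $1$ if it enters $v_i$, and $0$ otherwise. $\otimes$ is the Kronecker product, $(\cdot)^+$ the Moore–Penrose inverse, and $|\cdot|$, $\mathrm{sgn}$ act componentwise with $\mathrm{sgn}(0)=0$. The reference signals $\phi_i(t)\in\mathbb R^r$ are continuously differentiable, with $\boldsymbol\phi=(\phi_1^T,\dots,\phi_n^T)^T$ and $\bar\phi=\frac1n\sum_i\phi_i$. (A1) The graph is connected and undirected. (A2) There exist $\varphi,\dot\varphi<\infty$ such that $\sup_{t\ge0}\|(B^T\otimes I_r)\boldsymbol\phi(t)\|_\infty\le\varphi$ and $\sup_{t\ge0}\|(B^T\otimes I_r)\dot{\boldsymbol\phi}(t)\|_\infty\le\dot\varphi$. (A3) $\beta_i\ge(\gamma\varphi+\dot\varphi)\|B(B^TB)^+\otimes I_r\|_\infty$ for all $i$, where $\gamma>0$. Scheme: $\dot{\mathbf z}=-\gamma\mathbf z-\mathbf w$ and $\mathbf x=\mathbf z+\boldsymbol\phi$, with arbitrary $\mathbf z(t_0)$. The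 input is $\mathbf w=(w_1^T,\dots,w_n^T)^T=(B\otimes I_r)\widehat K\,\mathrm{sgn}\{(B^T\otimes I_r)\hat{\mathbf x}\}$, where $\widehat K$ is diagonal with positive initial entries (equal on the two directed copies of each undirected edge), updated by $\dot{\hat\kappa}_j=|\hat\xi_j|$ with $\hat{\boldsymbol\xi}=(B^T\otimes I_r)\hat{\mathbf x}$. The broadcast state is $\hat x_i(t)=x_i(t^i_{k_i(t)})$ with $t^i_{k_i(t)}=\max\{t^i_k\le t\}$, and $\varepsilon_i=x_i-\hat x_i$. The internal variable satisfies $\dot\eta_i=-\alpha_i\eta_i-\delta_i(\beta_i\mathbf 1_r^T|\varepsilon_i|-w_i^T\varepsilon_i)$ with $\eta_i(t_0)>0$, $\alpha_i>0$, $\delta_i\ge1$. Triggering: $t^i_1=t_0$ and $t^i_{k+1}=\min\{t>t^i_k:\theta_i(\beta_i\mathbf 1_r^T|\varepsilon_i(t)|-w_i(t)^T\varepsilon_i(t))\ge\eta_i(t)\}$ with $\theta_i\in(0,1)$. *)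

(* Defs.v *)
From Stdlib Require Import Reals Lra Lia Arith Relations.
Open Scope R_scope.

Fixpoint fsum (n : nat) (f : nat -> R) : R :=
  match n with O => 0 | S m => fsum m f + f m end.

(* maximum of nonnegative values over {0,...,n-1} (0 if n = 0) *)
Fixpoint fmax (n : nat) (f : nat -> R) : R :=
  match n with O => 0 | S m => Rmax (fmax m f) (f m) end.

Definition sgn (x : R) : R :=
  if Rlt_dec 0 x then 1 else if Rlt_dec x 0 then -1 else 0.

Definition mat := nat -> nat -> R.
Definition mmul (q : nat) (A B : mat) : mat :=
  fun a b => fsum q (fun c => A a c * B c b).
Definition mtr (A : mat) : mat := fun a b => A b a.

Definition is_pinv (m : nat) (A X : mat) : Prop :=
  forall a b, (a < m)%nat -> (b < m)%nat ->
    mmul m (mmul m A X) A a b = A a b /\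
    mmul m (mmul m X A) X a b = X a b /\
    mtr (mmul m A X) a b = mmul m A X a b /\
    mtr (mmul m X A) a b = mmul m X A a b.

(* Kronecker product M (x) I_r, with row/column index p <-> (p / r, p mod r) *)
Definition kronI (r : nat) (M : mat) : mat :=
  fun a b => M (a / r)%nat (b / r)%nat *
             (if Nat.eq_dec (a mod r) (b mod r) then 1 else 0).

Definition mat_inf_norm (p q : nat) (M : mat) : R :=
  fmax p (fun a => fsum q (fun b => Rabs (M a b))).

(* n agents 0..n-1, l directed edges 0..l-1, edge j goes from src j to dst j.
   Undirected simple graph, each undirected edge regarded as two directed edges. *)
Definition undirected_graph (n l : nat) (src dst : nat -> nat) : Prop :=
  (forall j, (j < l)%nat -> (src j < n)%nat /\ (dst j < n)%nat /\ src j <> dst j) /\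
  (forall j j', (j < l)%nat -> (j' < l)%nat -> src j = src j' -> dst j = dst j' -> j = j') /\
  (forall j, (j < l)%nat -> exists j', (j' < l)%nat /\ src j' = dst j /\ dst j' = src j).

Definition adj (l : nat) (src dst : nat -> nat) (u v : nat) : Prop :=
  exists j, (j < l)%nat /\ src j = u /\ dst j = v.

Definition connected (n l : nat) (src dst : nat -> nat) : Prop :=
  forall u v, (u < n)%nat -> (v < n)%nat -> clos_refl_trans nat (adj l src dst) u v.

Definition incid (src dst : nat -> nat) : mat :=
  fun i j => (if Nat.eq_dec (dst j) i then 1 else 0) - (if Nat.eq_dec (src j) i then 1 else 0).

(* stacked vectors v : nat -> nat -> R, v i c = c-th component of agent/edge i *)
(* (B (x) I_r) applied to an edge vector *)
Definition B_kron (l : nat) (src dst : nat -> nat) (v : nat -> nat -> R) : nat -> nat -> R :=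
  fun i c => fsum l (fun j => incid src dst i j * v j c).
(* (B^T (x) I_r) applied to an agent vector *)
Definition BT_kron (n : nat) (src dst : nat -> nat) (v : nat -> nat -> R) : nat -> nat -> R :=
  fun j c => fsum n (fun i => incid src dst i j * v i c).

Definition is_event_time (n : nat) (tau : nat -> nat -> R) (t : R) : Prop :=
  exists i k, (i < n)%nat /\ tau i k = t.

Definition cont_on_Ico (f : R -> R) (a b : R) : Prop :=
  forall t, a <= t < b -> limit1_in f (fun s => a <= s /\ s < b) (f t) t.

(* input w = (B (x) I_r) K sgn((B^T (x) I_r) xhat), K = diag(kh) *)
Definition input_w (n l : nat) (src dst : nat -> nat)
  (kh : nat -> nat -> R -> R) (xh : nat -> nat -> R -> R) (t : R) : nat -> nat -> R :=
  B_kron l src dst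
    (fun j c => kh j c t * sgn (BT_kron n src dst (fun i c' => xh i c' t) j c)).

Definition closed_loop (n r l : nat) (src dst : nat -> nat)
  (phi : nat -> nat -> R -> R) (gamma : R) (alpha beta delta theta : nat -> R)
  (t0 T0 : R)
  (z : nat -> nat -> R -> R)
  (kh : nat -> nat -> R -> R)       (* adaptive gains kappa_hat, per (edge, component) *)
  (eta : nat -> R -> R)
  (tau : nat -> nat -> R)           (* tau i k = (k+1)-th triggering time t^i_{k+1} of agent i *)
  (xh : nat -> nat -> R -> R)
  : Prop :=
  let x := fun i c t => z i c t + phi i c t in
  let w := fun t => input_w n l src dst kh xh t in
  (forall j c, (j < l)%nat -> (c < r)%nat -> 0 < kh j c t0) /\
  (forall j j' c, (j < l)%nat -> (j' < l)%nat -> (c < r)%nat ->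
      src j' = dst j -> dst j' = src j -> kh j c t0 = kh j' c t0) /\
  (forall i, (i < n)%nat -> 0 < eta i t0) /\
  (forall i c, (i < n)%nat -> (c < r)%nat -> cont_on_Ico (z i c) t0 T0) /\
  (forall j c, (j < l)%nat -> (c < r)%nat -> cont_on_Ico (kh j c) t0 T0) /\
  (forall i, (i < n)%nat -> cont_on_Ico (eta i) t0 T0) /\
  (forall t, t0 < t < T0 -> ~ is_event_time n tau t ->
     (forall i c, (i < n)%nat -> (c < r)%nat ->
        derivable_pt_lim (z i c) t (- gamma * z i c t - w t i c)) /\
     (forall j c, (j < l)%nat -> (c < r)%nat ->
        derivable_pt_lim (kh j c) t
          (Rabs (BT_kron n src dst (fun i c' => xh i c' t) j c))) /\
     (forall i, (i < n)%nat ->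
        derivable_pt_lim (eta i) t
          (- alpha i * eta i t
           - delta i * (beta i * fsum r (fun c => Rabs (x i c t - xh i c t))
                        - fsum r (fun c => w t i c * (x i c t - xh i c t)))))) /\
  (forall i, (i < n)%nat -> tau i O = t0) /\
  (forall i k, (i < n)%nat -> tau i k < tau i (S k)) /\
  (forall i k c t, (i < n)%nat -> (c < r)%nat -> tau i k <= t < tau i (S k) -> t < T0 ->
      xh i c t = x i c (tau i k)) /\
  (* dynamic triggering rule t^i_{k+1} = min{t > t^i_k : theta_i(beta_i 1^T|eps_i| - w_i^T eps_i) >= eta_i},
     with eps_i(t) = x_i(t) - x_i(t^i_k) the measurement error before the reset:
     (a) the condition fails strictly between consecutive events, *)
  (forall i k t, (i < n)%nat -> tau i k < t < tau i (S k) -> t < T0 ->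
      theta i * (beta i * fsum r (fun c => Rabs (x i c t - x i c (tau i k)))
                 - fsum r (fun c => w t i c * (x i c t - x i c (tau i k)))) < eta i t) /\
  (* (b) and it is reached at t^i_{k+1} (as t -> t^i_{k+1} from the left) *)
  (forall i k, (i < n)%nat -> tau i (S k) < T0 ->
      forall e, 0 < e -> exists t, tau i (S k) - e < t < tau i (S k) /\
        theta i * (beta i * fsum r (fun c => Rabs (x i c t - x i c (tau i k)))
                   - fsum r (fun c => w t i c * (x i c t - x i c (tau i k))))
        > eta i t - e).

(* Main.v *)
Require Import Defs.
From Stdlib Require Import Reals Lra Lia Psatz Classical Arith.
Open Scope R_scope.

Lemma fsum_ext n f g : (forall k, (k < n)%nat -> f k = g k) -> fsum n f = fsum n g.
Proof. induction n; simpl; intros H; auto. rewrite IHn by (intros; apply H; lia). rewrite H by lia. auto. Qed.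

Lemma fsum_le n f g : (forall k, (k < n)%nat -> f k <= g k) -> fsum n f <= fsum n g.
Proof. induction n; simpl; intros H; [lra|]. assert (f n <= g n) by (apply H; lia).
 assert (fsum n f <= fsum n g) by (apply IHn; intros; apply H; lia). lra. Qed.

Lemma fsum_abs n f : Rabs (fsum n f) <= fsum n (fun k => Rabs (f k)).
Proof. induction n; simpl. rewrite Rabs_R0; lra.
 eapply Rle_trans. apply Rabs_triang. lra. Qed.

Lemma fsum_const n c : fsum n (fun _ => c) = INR n * c.
Proof. induction n; simpl fsum. simpl; ring. rewrite IHn, S_INR; ring. Qed.

Lemma fsum_bound n f M : (forall k, (k < n)%nat -> Rabs (f k) <= M) -> Rabs (fsum n f) <= INR n * M.
Proof. intros H. eapply Rle_trans. apply fsum_abs. rewrite <- fsum_const. apply fsum_le. auto. Qed.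

Lemma fsum_scal n f c : fsum n (fun k => c * f k) = c * fsum n f.
Proof. induction n; simpl; [ring|]. rewrite IHn; ring. Qed.

Lemma fin_max n (P : nat -> R -> Prop) :
  (forall k x y, x <= y -> P k x -> P k y) ->
  (forall k, (k < n)%nat -> exists x, P k x) -> exists x, forall k, (k < n)%nat -> P k x.
Proof. intros Hm. induction n; intros H. exists 0; intros; lia.
 destruct IHn as [x Hx]. intros; apply H; lia. destruct (H n) as [y Hy]. lia.
 exists (Rmax x y). intros k Hk. destruct (Nat.eq_dec k n). subst. eapply Hm; [|eauto]. apply Rmax_r.
 eapply Hm; [|apply Hx; lia]. apply Rmax_l. Qed.

Lemma fin_min n (P : nat -> R -> Prop) :
  (forall k x y, 0 < y <= x -> P k x -> P k y) ->
  (forall k, (k < n)%nat -> exists x, 0 < x /\ P k x) -> exists x, 0 < x /\ forall k, (k < n)%nat -> P k x.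
Proof. intros Hm. induction n; intros H. exists 1; split; [lra|intros; lia].
 destruct IHn as [x [Hx0 Hx]]. intros; apply H; lia. destruct (H n) as [y [Hy0 Hy]]. lia.
 exists (Rmin x y). split. apply Rmin_pos; auto. intros k Hk. destruct (Nat.eq_dec k n). subst. eapply Hm; [|eauto].
 split. apply Rmin_pos; auto. apply Rmin_r.
 eapply Hm; [|apply Hx; lia]. split. apply Rmin_pos; auto. apply Rmin_l. Qed.

Lemma real_ind (a b : R) (P : R -> Prop) : a <= b -> P a ->
  (forall s, a < s <= b -> (forall v, a <= v < s -> P v) -> P s) ->
  (forall s, a <= s < b -> (forall v, a <= v <= s -> P v) ->
      exists d, 0 < d /\ forall v, s < v < s + d -> v <= b -> P v) ->
  forall v, a <= v <= b -> P v.
Proof.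
  intros Hab Ha Hl Hr.
  set (E := fun s => a <= s <= b /\ forall v, a <= v <= s -> P v).
  assert (Hb : bound E) by (exists b; intros s [Hs _]; lra).
  assert (He : exists x, E x) by (exists a; split; [lra|intros v Hv; replace v with a by lra; auto]).
  destruct (completeness E Hb He) as [s [Hub Hlub]].
  assert (Has : a <= s) by (apply Hub; destruct He; unfold E; split; [lra|intros v Hv; replace v with a by lra; auto]).
  assert (Hsb : s <= b) by (apply Hlub; intros x [Hx _]; lra).
  assert (Hlt : forall v, a <= v < s -> P v).
  { intros v Hv. destruct (classic (exists x, E x /\ v < x)) as [[x [[Hx1 Hx2] Hx3]]|Hn].
    apply Hx2; lra. exfalso. assert (s <= v). apply Hlub. intros x Ex. apply Rnot_lt_le. intros Hc. apply Hn; eauto. lra. }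
  assert (Hs : forall v, a <= v <= s -> P v).
  { intros v Hv. destruct (Req_dec v s). subst v. destruct (Req_dec a s). subst; auto. apply Hl; [lra|auto]. apply Hlt; lra. }
  destruct (Req_dec s b). subst s. auto.
  assert (Hsb' : s < b) by lra.
  destruct (Hr s (conj Has Hsb') Hs) as [d [Hd Hd2]].
  set (v' := Rmin (s + d/2) b).
  assert (s < v') by (unfold v'; apply Rmin_glb_lt; lra).
  assert (v' <= b) by apply Rmin_r. assert (v' <= s + d/2) by apply Rmin_l.
  assert (E v'). { split. lra. intros v Hv. destruct (Rle_lt_dec v s). apply Hs; lra. apply Hd2; lra. }
  assert (v' <= s) by (apply Hub; auto). lra.
Qed.

Lemma fin_max2 n r (P : nat -> nat -> R -> Prop) :
  (forall i c x y, x <= y -> P i c x -> P i c y) ->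
  (forall i c, (i < n)%nat -> (c < r)%nat -> exists x, P i c x) ->
  exists x, forall i c, (i < n)%nat -> (c < r)%nat -> P i c x.
Proof. intros Hm H.
 destruct (fin_max n (fun i x => forall c, (c < r)%nat -> P i c x)) as [x Hx].
 intros k x y Hxy Hk c Hc. eapply Hm; eauto.
 intros k Hk. apply fin_max. intros; eapply Hm; eauto. intros; apply H; auto.
 exists x. intros; apply Hx; auto. Qed.

Lemma fin_min2 n r (P : nat -> nat -> R -> Prop) :
  (forall i c x y, 0 < y <= x -> P i c x -> P i c y) ->
  (forall i c, (i < n)%nat -> (c < r)%nat -> exists x, 0 < x /\ P i c x) ->
  exists x, 0 < x /\ forall i c, (i < n)%nat -> (c < r)%nat -> P i c x.
Proof. intros Hm H.
 destruct (fin_min n (fun i x => forall c, (c < r)%nat -> P i c x)) as [x [Hx0 Hx]].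
 intros k x y Hxy Hk c Hc. eapply Hm; eauto.
 intros k Hk. apply fin_min. intros; eapply Hm; eauto. intros; apply H; auto.
 exists x. split; auto. Qed.

Definition ccont (f : R -> R) a b := forall t, a <= t <= b -> forall eps, 0 < eps ->
  exists d, 0 < d /\ forall s, a <= s <= b -> Rabs (s - t) < d -> Rabs (f s - f t) < eps.

Lemma ccont_of_Ico f t0 T0 a b : cont_on_Ico f t0 T0 -> t0 <= a -> b < T0 -> ccont f a b.
Proof. intros H Ha Hb t Ht eps He. destruct (H t ltac:(lra) eps He) as [d [Hd Hd2]].
 exists d; split; auto. intros s Hs Hst. apply (Hd2 s). split. simpl; lra. exact Hst. Qed.

Lemma ccont_of_cont f a b : (forall t, continuity_pt f t) -> ccont f a b.
Proof. intros H t Ht eps He. destruct (H t eps He) as [d [Hd Hd2]].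
 exists d; split; auto. intros s Hs Hst. destruct (Req_dec s t). subst. unfold Rminus; rewrite Rplus_opp_r, Rabs_R0; auto.
 apply (Hd2 s). split. split. exact I. auto. exact Hst. Qed.

Lemma ccont_plus f g a b : ccont f a b -> ccont g a b -> ccont (fun u => f u + g u) a b.
Proof. intros Hf Hg t Ht eps He. destruct (Hf t Ht (eps/2) ltac:(lra)) as [d1 [Hd1 H1]].
 destruct (Hg t Ht (eps/2) ltac:(lra)) as [d2 [Hd2 H2]]. exists (Rmin d1 d2); split. apply Rmin_pos; auto.
 intros s Hs Hst. assert (A1 := H1 s Hs (Rlt_le_trans _ _ _ Hst (Rmin_l _ _))).
 assert (A2 := H2 s Hs (Rlt_le_trans _ _ _ Hst (Rmin_r _ _))).
 replace (f s + g s - (f t + g t)) with ((f s - f t) + (g s - g t)) by ring.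
 eapply Rle_lt_trans. apply Rabs_triang. lra. Qed.

Lemma ccont_scal c f a b : ccont f a b -> ccont (fun u => c * f u) a b.
Proof. intros Hf t Ht eps He. destruct (Hf t Ht (eps/(Rabs c + 1))) as [d [Hd H1]].
 apply Rdiv_lt_0_compat; auto. pose proof (Rabs_pos c); lra.
 exists d; split; auto. intros s Hs Hst. replace (c * f s - c * f t) with (c * (f s - f t)) by ring.
 rewrite Rabs_mult. assert (A := H1 s Hs Hst). pose proof (Rabs_pos c).
 assert (Rabs c * Rabs (f s - f t) <= Rabs c * (eps / (Rabs c + 1))). apply Rmult_le_compat_l; lra.
 assert (Rabs c * (eps / (Rabs c + 1)) < eps). apply Rmult_lt_reg_r with (Rabs c + 1). lra.
 field_simplify. lra. lra. lra. Qed.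

Lemma ccont_ext f g a b : (forall u, f u = g u) -> ccont f a b -> ccont g a b.
Proof. intros E H t Ht eps He. destruct (H t Ht eps He) as [d [Hd H1]]. exists d; split; auto.
 intros; rewrite <- !E; auto. Qed.

Lemma mono (f f' : R -> R) (a b : R) (E : R -> Prop) : a <= b -> ccont f a b ->
  (forall t, a <= t < b -> exists d, 0 < d /\ forall s, t < s < t + d -> ~ E s) ->
  (forall s, a < s < b -> ~ E s -> derivable_pt_lim f s (f' s) /\ f' s <= 0) ->
  f b <= f a.
Proof.
  intros Hab Hc Hfree Hd.
  apply (real_ind a b (fun v => f v <= f a)); auto; try lra.
  - intros s Hs Hlt. apply Rnot_lt_le; intro Hc2.
    destruct (Hc s ltac:(lra) (f s - f a) ltac:(lra)) as [d [Hd0 Hd1]].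
    set (v := Rmax a (s - d/2)).
    assert (a <= v) by apply Rmax_l. assert (s - d/2 <= v) by apply Rmax_r.
    assert (v < s) by (apply Rmax_lub_lt; lra).
    assert (Hv := Hlt v ltac:(lra)). assert (A := Hd1 v ltac:(lra) ltac:(rewrite Rabs_left; lra)).
    rewrite Rabs_minus_sym in A. apply Rabs_def2 in A. lra.
  - intros s Hs Hle. destruct (Hfree s Hs) as [d [Hd0 Hd1]]. exists d; split; auto.
    intros v Hv Hvb. assert (f s <= f a) by (apply Hle; lra).
    cut (f v <= f s). lra. apply Rnot_lt_le; intro Hc2.
    set (eps := (f v - f s)/3).
    destruct (Hc s ltac:(lra) eps ltac:(unfold eps; lra)) as [d1 [Hd10 Hd11]].
    destruct (Hc v ltac:(lra) eps ltac:(unfold eps; lra)) as [d2 [Hd20 Hd21]].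
    set (p := s + Rmin d1 (v - s) / 3).
    assert (0 < Rmin d1 (v - s)) by (apply Rmin_pos; lra).
    assert (Rmin d1 (v - s) <= d1) by apply Rmin_l. assert (Rmin d1 (v - s) <= v - s) by apply Rmin_r.
    set (q := v - Rmin d2 (v - p) / 2).
    assert (0 < Rmin d2 (v - p)) by (apply Rmin_pos; unfold p; lra).
    assert (Rmin d2 (v - p) <= d2) by apply Rmin_l. assert (Rmin d2 (v - p) <= v - p) by apply Rmin_r.
    assert (Hpq : p < q) by (unfold q; lra).
    assert (Hsp : s < p) by (unfold p; lra). assert (Hqv : q < v) by (unfold q; lra).
    assert (Hps : p - s < d1) by (unfold p; lra). assert (Hvq : v - q < d2) by (unfold q; lra).
    clearbody p q.
    destruct (MVT_cor2 f f' p q Hpq) as [c [Hm1 Hm2]].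
    { intros c Hcc. apply Hd. lra. apply Hd1. lra. }
    assert (f' c <= 0). { apply Hd. lra. apply Hd1. lra. }
    assert (A1 := Hd11 p ltac:(lra) ltac:(rewrite Rabs_right; lra)).
    assert (A2 := Hd21 q ltac:(lra) ltac:(rewrite Rabs_left; lra)).
    apply Rabs_def2 in A1. apply Rabs_def2 in A2.
    assert (f' c * (q - p) <= 0) by nra.
    unfold eps in *; lra.
Qed.

Lemma seq_mono (u : nat -> R) : (forall k, u k < u (S k)) -> forall k k', (k <= k')%nat -> u k <= u k'.
Proof. intros H k k' Hk. induction Hk. lra. specialize (H m). lra. Qed.

Lemma seq_smono (u : nat -> R) : (forall k, u k < u (S k)) -> forall k k', (k < k')%nat -> u k < u k'.
Proof. intros H k k' Hk. apply Rlt_le_trans with (u (S k)). auto. apply seq_mono; auto. Qed.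

Lemma cv_below (u : nat -> R) L : (forall k, u k < u (S k)) -> Un_cv u L -> forall k, u k < L.
Proof. intros H Hc k. apply Rnot_le_lt; intro Hk.
 destruct (Hc (u (S k) - u k)) as [N HN]. specialize (H k); lra.
 specialize (HN (max N (S k)) ltac:(lia)). unfold Rdist in HN.
 assert (u (S k) <= u (max N (S k))) by (apply seq_mono; auto; lia).
 apply Rabs_def2 in HN. lra. Qed.

Lemma seq_search (u : nat -> R) v K : (forall k, u k < u (S k)) -> u O <= v -> v < u K ->
  exists k, u k <= v < u (S k).
Proof. intros H. induction K; intros H0 HK. lra.
 destruct (Rle_lt_dec (u K) v). exists K; lra. apply IHK; auto. Qed.

Lemma gap_fin (u : nat -> R) s K : exists d, 0 < d /\ forall k, (k < K)%nat -> s < u k -> s + d <= u k.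
Proof. induction K. exists 1; split; [lra | intros; lia].
 destruct IHK as [d [Hd H]]. destruct (Rlt_le_dec s (u K)).
 - exists (Rmin d (u K - s)). split. apply Rmin_pos; lra. intros k Hk Hs.
   destruct (Nat.eq_dec k K). subst. pose proof (Rmin_r d (u K - s)); lra.
   pose proof (Rmin_l d (u K - s)). specialize (H k ltac:(lia) Hs). lra.
 - exists d; split; auto. intros k Hk Hs. destruct (Nat.eq_dec k K). subst; lra. apply H; auto; lia.
Qed.

Lemma gap_one (u : nat -> R) s s' K : (forall k, u k < u (S k)) -> s < s' -> s' < u K ->
  exists d, 0 < d /\ forall k, ~ (s < u k < s + d).
Proof. intros Hu Hs HK. destruct (gap_fin u s K) as [d [Hd H]].
 exists (Rmin d (s' - s)). split. apply Rmin_pos; lra. intros k [Hk1 Hk2].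
 pose proof (Rmin_l d (s' - s)). pose proof (Rmin_r d (s' - s)).
 destruct (Compare_dec.le_lt_dec K k). assert (u K <= u k) by (apply seq_mono; auto). lra.
 specialize (H k l Hk1). lra. Qed.

Lemma pick_agent (n : nat) (tau : nat -> nat -> R) (T0 : R) (i : nat) :
  (i < n)%nat -> (forall j k, (j < n)%nat -> tau j k < tau j (S k)) -> Un_cv (tau i) T0 ->
  exists j T, (j < n)%nat /\ T <= T0 /\ (forall k, tau j k < T) /\
    (forall eps, 0 < eps -> exists k, T - eps < tau j k) /\
    (forall j' t, (j' < n)%nat -> t < T -> exists k, t < tau j' k).
Proof.
  intros Hi Hinc Hcv.
  assert (Hm : forall m, (m <= n)%nat -> exists j T, (j < n)%nat /\ T <= T0 /\ (forall k, tau j k < T) /\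
    (forall eps, 0 < eps -> exists k, T - eps < tau j k) /\
    (forall j' t, (j' < m)%nat -> t < T -> exists k, t < tau j' k)).
  { induction m; intros Hmn.
    - exists i, T0. split; auto. split. lra. split. apply cv_below; auto.
      split. intros eps He. destruct (Hcv eps He) as [N HN]. exists N. specialize (HN N (le_n _)).
      unfold Rdist in HN. apply Rabs_def2 in HN. lra. intros; lia.
    - destruct (IHm ltac:(lia)) as [j [T [Hj [HT [Hb [Ha Hall]]]]]].
      destruct (classic (forall t, t < T -> exists k, t < tau m k)) as [Hy|Hno].
      + exists j, T. repeat split; auto. intros j' t Hj' Ht. destruct (Nat.eq_dec j' m). subst; auto. apply Hall; auto; lia.
      + apply not_all_ex_not in Hno. destruct Hno as [t Ht].
        apply imply_to_and in Ht. destruct Ht as [Ht Hno].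
        assert (Hle : forall k, tau m k <= t). { intros k. apply Rnot_lt_le. intro. apply Hno; eauto. }
        set (E := fun x => exists k, x = tau m k).
        destruct (completeness E) as [L [HLu HLl]]. exists t. intros x [k ->]. auto. exists (tau m O), O; auto.
        assert (HLt : L <= t) by (apply HLl; intros x [k ->]; auto).
        assert (Hbel : forall k, tau m k < L).
        { intros k. apply Rlt_le_trans with (tau m (S k)). apply Hinc; lia. apply HLu. exists (S k); auto. }
        assert (Happ : forall eps, 0 < eps -> exists k, L - eps < tau m k).
        { intros eps He. apply NNPP. intro Hn. assert (L <= L - eps). apply HLl. intros x [k ->].
          apply Rnot_lt_le. intro; apply Hn; eauto. lra. }
        exists m, L. split. lia. split. lra. split; auto. split; auto.
        intros j' t' Hj' Ht'. destruct (Nat.eq_dec j' m). subst. destruct (Happ (L - t') ltac:(lra)) as [k Hk].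
        exists k; lra. apply Hall. lia. lra. }
  apply Hm; lia.
Qed.

Lemma incid_abs src dst i j : Rabs (incid src dst i j) <= 1.
Proof. unfold incid. destruct (Nat.eq_dec (dst j) i); destruct (Nat.eq_dec (src j) i);
 apply Rabs_le; lra. Qed.

Lemma sgn_abs x : Rabs (sgn x) <= 1.
Proof. unfold sgn. destruct (Rlt_dec 0 x); [|destruct (Rlt_dec x 0)]; apply Rabs_le; lra. Qed.

Lemma w_bound n l src dst kh xh t i c K :
  (forall j, (j < l)%nat -> Rabs (kh j c t) <= K) ->
  Rabs (input_w n l src dst kh xh t i c) <= INR l * K.
Proof. intros H. unfold input_w, B_kron. apply fsum_bound. intros k Hk.
 rewrite !Rabs_mult. pose proof (incid_abs src dst i k). pose proof (H k Hk).
 pose proof (sgn_abs (BT_kron n src dst (fun i0 c' => xh i0 c' t) k c)).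
 pose proof (Rabs_pos (incid src dst i k)). pose proof (Rabs_pos (kh k c t)).
 pose proof (Rabs_pos (sgn (BT_kron n src dst (fun i0 c' => xh i0 c' t) k c))).
 assert (Rabs (kh k c t) * Rabs (sgn (BT_kron n src dst (fun i0 c' => xh i0 c' t) k c)) <= K) by nra.
 nra. Qed.

Lemma BT_bound n src dst (v : nat -> nat -> R) j c K :
  (forall i, (i < n)%nat -> Rabs (v i c) <= K) -> Rabs (BT_kron n src dst v j c) <= INR n * K.
Proof. intros H. unfold BT_kron. apply fsum_bound. intros k Hk. rewrite Rabs_mult.
 pose proof (incid_abs src dst k j). pose proof (H k Hk). pose proof (Rabs_pos (incid src dst k j)).
 pose proof (Rabs_pos (v k c)). nra. Qed.

Lemma expderiv A t0 u : derivable_pt_lim (fun u => exp (A * (u - t0))) u (A * exp (A * (u - t0))).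
Proof.
  assert (H1 : derivable_pt_lim (fun u => A * (u - t0)) u A).
  { assert (H0 : derivable_pt_lim (fun u => u - t0) u 1).
    { replace 1 with (1 - 0) by ring. apply (derivable_pt_lim_minus id (fct_cte t0)).
      apply derivable_pt_lim_id. apply derivable_pt_lim_const. }
    assert (H := derivable_pt_lim_scal (fun u => u - t0) A u 1 H0). rewrite Rmult_1_r in H. exact H. }
  rewrite Rmult_comm. apply (derivable_pt_lim_comp (fun u => A * (u - t0)) exp). auto.
  apply derivable_pt_lim_exp. Qed.

Lemma Gderiv M A t0 u : derivable_pt_lim (fun u => M * exp (A * (u - t0))) u (A * (M * exp (A * (u - t0)))).
Proof. replace (A * (M * exp (A * (u - t0)))) with (M * (A * exp (A * (u - t0)))) by ring.
 apply (derivable_pt_lim_scal (fun u => exp (A * (u - t0)))). apply expderiv. Qed.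

Lemma Gcont M A t0 a b : ccont (fun u => M * exp (A * (u - t0))) a b.
Proof. apply ccont_of_cont. intros t. apply derivable_continuous_pt. exists (A * (M * exp (A * (t - t0)))).
 apply Gderiv. Qed.

Lemma persist g a b t : ccont g a b -> a <= t <= b -> g t < 0 ->
  exists d, 0 < d /\ forall v, a <= v <= b -> Rabs (v - t) < d -> g v < 0.
Proof. intros Hc Ht Hg. destruct (Hc t Ht (- g t) ltac:(lra)) as [d [Hd H]]. exists d; split; auto.
 intros v Hv Hvt. specialize (H v Hv Hvt). apply Rabs_def2 in H. lra. Qed.

Lemma event_free n (tau : nat -> nat -> R) T :
  (forall j k, (j < n)%nat -> tau j k < tau j (S k)) ->
  (forall j' t, (j' < n)%nat -> t < T -> exists k, t < tau j' k) ->
  forall s, s < T -> exists d, 0 < d /\ forall v, s < v < s + d -> ~ is_event_time n tau v.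
Proof. intros Hinc Hg s Hs.
 destruct (fin_min n (fun j d => forall k, ~ (s < tau j k < s + d))) as [d [Hd H]].
 - intros k x y Hxy H k' Hk'. apply (H k'). lra.
 - intros j' Hj'. destruct (Hg j' ((s + T)/2) Hj' ltac:(lra)) as [K HK].
   apply (gap_one (tau j') s ((s+T)/2) K); auto. lra.
 - exists d; split; auto. intros v Hv [i [k [Hi Hk]]]. apply (H i Hi k). lra.
Qed.

Lemma ccont_minus f g a b : ccont f a b -> ccont g a b -> ccont (fun u => f u - g u) a b.
Proof. intros Hf Hg. apply ccont_ext with (fun u => f u + (-1) * g u). intros; ring.
 apply ccont_plus; auto. apply ccont_scal; auto. Qed.

Lemma abs_persist f g a b t : ccont f a b -> ccont g a b -> a <= t <= b -> Rabs (f t) < g t ->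
  exists d, 0 < d /\ forall v, a <= v <= b -> Rabs (v - t) < d -> Rabs (f v) < g v.
Proof. intros Hf Hg Ht H. apply Rabs_def2 in H.
 destruct (persist (fun u => f u - g u) a b t) as [d1 [Hd1 H1]]; auto. apply ccont_minus; auto. lra.
 destruct (persist (fun u => - f u - g u) a b t) as [d2 [Hd2 H2]]; auto.
 apply ccont_ext with (fun u => (-1) * f u - g u). intros; ring. apply ccont_minus; auto. apply ccont_scal; auto. lra.
 exists (Rmin d1 d2). split. apply Rmin_pos; auto. intros v Hv Hvt.
 specialize (H1 v Hv (Rlt_le_trans _ _ _ Hvt (Rmin_l _ _))).
 specialize (H2 v Hv (Rlt_le_trans _ _ _ Hvt (Rmin_r _ _))). apply Rabs_def1; lra. Qed.

Lemma abs_mono f f' g g' a b (E : R -> Prop) : a <= b -> ccont f a b -> ccont g a b ->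
  (forall t, a <= t < b -> exists d, 0 < d /\ forall s, t < s < t + d -> ~ E s) ->
  (forall s, a < s < b -> ~ E s -> derivable_pt_lim f s (f' s) /\ derivable_pt_lim g s (g' s) /\ Rabs (f' s) <= g' s) ->
  Rabs (f a) < g a -> Rabs (f b) < g b.
Proof. intros Hab Hf Hg Hfr Hd Ha. apply Rabs_def2 in Ha.
 assert (A1 : f b - g b <= f a - g a).
 { apply (mono (fun u => f u - g u) (fun u => f' u - g' u) a b E); auto. apply ccont_minus; auto.
   intros s Hs HE. destruct (Hd s Hs HE) as [D1 [D2 D3]]. split.
   apply (derivable_pt_lim_minus f g); auto. pose proof (Rle_abs (f' s)); pose proof (Rle_abs (- f' s)); rewrite Rabs_Ropp in *; lra. }
 assert (A2 : - f b - g b <= - f a - g a).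
 { apply (mono (fun u => - f u - g u) (fun u => - f' u - g' u) a b E); auto.
   apply ccont_ext with (fun u => (-1) * f u - g u). intros; ring. apply ccont_minus; auto. apply ccont_scal; auto.
   intros s Hs HE. destruct (Hd s Hs HE) as [D1 [D2 D3]]. split.
   apply (derivable_pt_lim_minus (- f)%F g); auto. apply derivable_pt_lim_opp; auto. pose proof (Rle_abs (f' s)); pose proof (Rle_abs (- f' s)); rewrite Rabs_Ropp in *; lra. }
 apply Rabs_def1; lra. Qed.

Lemma ccont_mult f g a b : ccont f a b -> ccont g a b -> ccont (fun u => f u * g u) a b.
Proof. intros Hf Hg t Ht eps He.
 set (e1 := Rmin 1 (eps / (3 * (Rabs (g t) + 1)))).
 set (e2 := Rmin 1 (eps / (3 * (Rabs (f t) + 1)))).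
 pose proof (Rabs_pos (g t)). pose proof (Rabs_pos (f t)).
 assert (He1 : 0 < e1). { apply Rmin_pos. lra. apply Rdiv_lt_0_compat; lra. }
 assert (He2 : 0 < e2). { apply Rmin_pos. lra. apply Rdiv_lt_0_compat; lra. }
 destruct (Hf t Ht e1 He1) as [d1 [Hd1 H1]]. destruct (Hg t Ht e2 He2) as [d2 [Hd2 H2]].
 exists (Rmin d1 d2). split. apply Rmin_pos; auto. intros s Hs Hst.
 specialize (H1 s Hs (Rlt_le_trans _ _ _ Hst (Rmin_l _ _))).
 specialize (H2 s Hs (Rlt_le_trans _ _ _ Hst (Rmin_r _ _))).
 replace (f s * g s - f t * g t) with ((f s - f t) * (g s - g t) + (f s - f t) * g t + f t * (g s - g t)) by ring.
 assert (E1 : e1 * (Rabs (g t) + 1) <= eps / 3).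
 { apply Rle_trans with ((eps / (3 * (Rabs (g t) + 1))) * (Rabs (g t) + 1)).
   apply Rmult_le_compat_r. lra. apply Rmin_r. right. field. lra. }
 assert (E2 : e2 * (Rabs (f t) + 1) <= eps / 3).
 { apply Rle_trans with ((eps / (3 * (Rabs (f t) + 1))) * (Rabs (f t) + 1)).
   apply Rmult_le_compat_r. lra. apply Rmin_r. right. field. lra. }
 assert (e1 <= 1) by apply Rmin_l. assert (e2 <= 1) by apply Rmin_l.
 eapply Rle_lt_trans. apply Rabs_triang. eapply Rle_lt_trans. apply Rplus_le_compat_r. apply Rabs_triang.
 rewrite !Rabs_mult.
 pose proof (Rabs_pos (f s - f t)). pose proof (Rabs_pos (g s - g t)).
 assert (Rabs (f s - f t) * Rabs (g s - g t) <= e1 * e2) by nra.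
 assert (Rabs (f s - f t) * Rabs (g t) <= e1 * Rabs (g t)) by nra.
 assert (Rabs (f t) * Rabs (g s - g t) <= Rabs (f t) * e2) by nra.
 nra. Qed.

Lemma lin_deriv L a e v : derivable_pt_lim (fun u => L * (u - a) + e) v L.
Proof.
 assert (H0 : derivable_pt_lim (fun u => u - a) v (1 - 0)).
 { apply (derivable_pt_lim_minus id (fct_cte a)). apply derivable_pt_lim_id. apply derivable_pt_lim_const. }
 assert (H1 := derivable_pt_lim_scal _ L v _ H0).
 assert (H2 := derivable_pt_lim_plus _ (fct_cte e) v _ _ H1 (derivable_pt_lim_const e v)).
 replace (L * (1 - 0) + 0) with L in H2 by ring. exact H2. Qed.

Theorem theorem3
  (n r l : nat) (src dst : nat -> nat)
  (* (A1) connected undirected graph *)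
  (Hgraph : undirected_graph n l src dst)
  (Hconn : connected n l src dst)
  (* continuously differentiable reference signals phi_i(t) in R^r *)
  (phi dphi : nat -> nat -> R -> R)
  (Hdphi : forall i c t, (i < n)%nat -> (c < r)%nat -> derivable_pt_lim (phi i c) t (dphi i c t))
  (Hdphic : forall i c, (i < n)%nat -> (c < r)%nat -> continuity (dphi i c))
  (t0 : R) (Ht0 : 0 <= t0)
  (* (A2) *)
  (varphi dvarphi : R)
  (HA2a : forall t j c, 0 <= t -> (j < l)%nat -> (c < r)%nat ->
      Rabs (BT_kron n src dst (fun i c' => phi i c' t) j c) <= varphi)
  (HA2b : forall t j c, 0 <= t -> (j < l)%nat -> (c < r)%nat ->
      Rabs (BT_kron n src dst (fun i c' => dphi i c' t) j c) <= dvarphi)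
  (* parameters *)
  (gamma : R) (Hgamma : 0 < gamma)
  (alpha beta delta theta : nat -> R)
  (Halpha : forall i, (i < n)%nat -> 0 < alpha i)
  (Hdelta : forall i, (i < n)%nat -> 1 <= delta i)
  (Htheta : forall i, (i < n)%nat -> 0 < theta i < 1)
  (* (A3), with X = (B^T B)^+ *)
  (X : mat)
  (HX : is_pinv l (mmul n (mtr (incid src dst)) (incid src dst)) X)
  (HA3 : forall i, (i < n)%nat ->
      (gamma * varphi + dvarphi) *
        mat_inf_norm (n * r) (l * r) (kronI r (mmul l (incid src dst) X)) <= beta i)
  (* any closed-loop trajectory on [t0, T0) *)
  (T0 : R)
  (z kh : nat -> nat -> R -> R) (eta : nat -> R -> R)
  (tau : nat -> nat -> R) (xh : nat -> nat -> R -> R)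
  (Hsol : closed_loop n r l src dst phi gamma alpha beta delta theta t0 T0 z kh eta tau xh) :
  forall i, (i < n)%nat -> ~ Un_cv (tau i) T0.
Proof.
  intros i Hi Hcv.
  unfold closed_loop in Hsol; cbv beta zeta in Hsol.
  destruct Hsol as (Hk0 & Hkeq & He0 & Hzc & Hkc & Hec & Hder & Htau0 & Htinc & Hxh & Htra & Htrb).
  assert (Hinc : forall j k, (j < n)%nat -> tau j k < tau j (S k)) by auto.
  destruct (pick_agent n tau T0 i Hi Hinc Hcv) as [j [T [Hj [HT [Hbel [Happ Hgood]]]]]].
  assert (Ht0T : t0 < T). { rewrite <- (Htau0 j Hj). apply Rlt_trans with (tau j 1%nat); auto. }
  assert (Hfree := event_free n tau T Hinc Hgood).
  assert (Htge : forall i' k, (i' < n)%nat -> t0 <= tau i' k).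
  { intros i' k Hi'. rewrite <- (Htau0 i' Hi'). apply seq_mono; auto; lia. }
  destruct (fin_max2 n r (fun i c P => forall t, t0 <= t <= T0 -> Rabs (phi i c t) <= P)) as [P HP].
  { intros; eapply Rle_trans; eauto. }
  { intros i' c Hi' Hc. destruct (continuity_ab_maj (fun t => Rabs (phi i' c t)) t0 T0 ltac:(lra)) as [Mx [HMx _]].
    intros t _. apply (continuity_pt_comp (phi i' c) Rabs). exact (derivable_continuous_pt _ _ (exist _ _ (Hdphi i' c t Hi' Hc))).
    apply Rcontinuity_abs. eauto. }
  destruct (fin_max2 n r (fun i c P => forall t, t0 <= t <= T0 -> Rabs (dphi i c t) <= P)) as [D HD].
  { intros; eapply Rle_trans; eauto. }
  { intros i' c Hi' Hc. destruct (continuity_ab_maj (fun t => Rabs (dphi i' c t)) t0 T0 ltac:(lra)) as [Mx [HMx _]].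
    intros t _. apply (continuity_pt_comp (dphi i' c) Rabs). apply Hdphic; auto. apply Rcontinuity_abs. eauto. }
  destruct (fin_max2 n r (fun i c M => Rabs (z i c t0) < M)) as [Mz HMz].
  { intros; lra. } { intros; exists (Rabs (z i0 c t0) + 1); lra. }
  destruct (fin_max2 l r (fun i c M => Rabs (kh i c t0) < M)) as [Mk HMk].
  { intros; lra. } { intros; exists (Rabs (kh i0 c t0) + 1); lra. }
  set (M := Rmax (Rmax Mz Mk) (Rabs P + 1)).
  assert (HM1 : Mz <= M) by (unfold M; eapply Rle_trans; [apply Rmax_l|apply Rmax_l]).
  assert (HM2 : Mk <= M) by (unfold M; eapply Rle_trans; [apply Rmax_r|apply Rmax_l]).
  assert (HM3 : Rabs P + 1 <= M) by (unfold M; apply Rmax_r).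
  clearbody M.
  assert (HPM : P <= M) by (pose proof (Rle_abs P); lra).
  assert (HM0 : 0 < M) by (pose proof (Rabs_pos P); lra).
  set (A := gamma + INR l + 2 * INR n).
  assert (HA : gamma <= A). { unfold A. pose proof (pos_INR l). pose proof (pos_INR n). lra. }
  set (G := fun u => M * exp (A * (u - t0))).
  assert (HGpos : forall u, 0 < G u). { intros u; unfold G. apply Rmult_lt_0_compat. lra. apply exp_pos. }
  assert (HGmono : forall u v, u <= v -> G u <= G v).
  { intros u v Huv. unfold G. apply Rmult_le_compat_l. lra.
    destruct (Req_dec u v). subst; lra. left. apply exp_increasing. apply Rmult_lt_compat_l. lra. lra. }
  assert (HGt0 : G t0 = M). { unfold G. replace (A * (t0 - t0)) with 0 by ring. rewrite exp_0; ring. }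
  assert (HGM : forall u, t0 <= u -> M <= G u). { intros u Hu. rewrite <- HGt0. auto. }
  set (Phi := fun u => (forall i c, (i < n)%nat -> (c < r)%nat -> Rabs (z i c u) < G u) /\
                       (forall j c, (j < l)%nat -> (c < r)%nat -> Rabs (kh j c u) < G u)).
  assert (HGd : forall u, derivable_pt_lim G u (A * G u)) by (intros; apply Gderiv).
  assert (HGc : forall a b, ccont G a b) by (intros; apply Gcont).
  assert (HPhi : forall u, t0 <= u < T -> Phi u).
  { intros u1 [Hu1a Hu1b].
    apply (real_ind t0 u1 Phi); [lra | | | | lra].
    - split; intros; rewrite HGt0. specialize (HMz i0 c H H0); lra. specialize (HMk j0 c H H0); lra.
    - intros s [Hs1 Hs2] IH. split.
      + intros i' c Hi' Hc.
        apply (abs_mono (z i' c) (fun u => - gamma * z i' c u - input_w n l src dst kh xh u i' c)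
                 G (fun u => A * G u) t0 s (is_event_time n tau)); auto; try lra.
        * apply (ccont_of_Ico _ t0 T0); auto; lra.
        * intros t Ht; apply Hfree; lra.
        * intros v Hv Hnv. destruct (Hder v ltac:(lra) Hnv) as [Dz [Dk De]].
          split. auto. split. auto.
          destruct (IH v ltac:(lra)) as [Hz Hk].
          assert (Hw := w_bound n l src dst kh xh v i' c (G v) ltac:(intros; left; apply Hk; auto)).
          specialize (Hz i' c Hi' Hc).
          eapply Rle_trans. apply Rabs_triang. rewrite Rabs_Ropp, Rabs_mult, Rabs_Ropp, (Rabs_right gamma) by lra.
          assert (gamma * Rabs (z i' c v) <= gamma * G v) by (apply Rmult_le_compat_l; lra).
          unfold A. pose proof (pos_INR n). pose proof (HGpos v). nra.
        * rewrite HGt0. specialize (HMz i' c Hi' Hc); lra.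
      + intros j' c Hj' Hc.
        apply (abs_mono (kh j' c) (fun u => Rabs (BT_kron n src dst (fun i c' => xh i c' u) j' c))
                 G (fun u => A * G u) t0 s (is_event_time n tau)); auto; try lra.
        * apply (ccont_of_Ico _ t0 T0); auto; lra.
        * intros t Ht; apply Hfree; lra.
        * intros v Hv Hnv. destruct (Hder v ltac:(lra) Hnv) as [Dz [Dk De]].
          split. auto. split. auto. rewrite Rabs_Rabsolu.
          assert (Hb : Rabs (BT_kron n src dst (fun i c' => xh i c' v) j' c) <= INR n * (G v + P)).
          { apply BT_bound. intros i' Hi'.
            destruct (Hgood i' v Hi' ltac:(lra)) as [K HK].
            destruct (seq_search (tau i') v K) as [k [Hk1 Hk2]]. intros; auto. rewrite Htau0 by auto; lra. auto.
            rewrite (Hxh i' k c v Hi' Hc ltac:(lra) ltac:(lra)).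
            assert (t0 <= tau i' k) by auto.
            destruct (IH (tau i' k) ltac:(lra)) as [Hz _]. specialize (Hz i' c Hi' Hc).
            assert (G (tau i' k) <= G v) by (apply HGmono; lra).
            assert (Rabs (phi i' c (tau i' k)) <= P) by (apply HP; auto; lra).
            eapply Rle_trans. apply Rabs_triang. lra. }
          assert (P <= G v) by (pose proof (HGM v ltac:(lra)); lra).
          unfold A. pose proof (pos_INR n). pose proof (pos_INR l). pose proof (HGpos v). nra.
        * rewrite HGt0. specialize (HMk j' c Hj' Hc); lra.
    - intros s [Hs1 Hs2] IH. destruct (IH s ltac:(lra)) as [Hz Hk].
      destruct (fin_min2 n r (fun i c d => forall v, t0 <= v <= u1 -> Rabs (v - s) < d -> Rabs (z i c v) < G v)) as [d1 [Hd1 H1]].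
      { intros i' c x y Hxy H v Hv Hvs. apply H; auto; lra. }
      { intros i' c Hi' Hc. apply abs_persist; auto. apply (ccont_of_Ico _ t0 T0); auto; lra. lra. }
      destruct (fin_min2 l r (fun i c d => forall v, t0 <= v <= u1 -> Rabs (v - s) < d -> Rabs (kh i c v) < G v)) as [d2 [Hd2 H2]].
      { intros i' c x y Hxy H v Hv Hvs. apply H; auto; lra. }
      { intros i' c Hi' Hc. apply abs_persist; auto. apply (ccont_of_Ico _ t0 T0); auto; lra. lra. }
      exists (Rmin d1 d2). split. apply Rmin_pos; auto.
      intros v Hv Hvb. pose proof (Rmin_l d1 d2). pose proof (Rmin_r d1 d2).
      split; intros; [apply H1 | apply H2]; auto; try lra; rewrite Rabs_right; lra. }
  set (GT := G T).
  assert (HB : forall u, t0 <= u < T ->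
     (forall i c, (i < n)%nat -> (c < r)%nat -> Rabs (z i c u) <= GT) /\
     (forall i c, (c < r)%nat -> Rabs (input_w n l src dst kh xh u i c) <= INR l * GT)).
  { intros u Hu. destruct (HPhi u Hu) as [Hz Hk]. assert (G u <= GT) by (apply HGmono; lra). split.
    intros; left; eapply Rlt_le_trans; [apply Hz|]; auto.
    intros; apply w_bound. intros; left; eapply Rlt_le_trans; [apply Hk|]; auto. }
  assert (HGT : 0 < GT) by apply HGpos.
  set (W := INR l * GT).
  assert (HW : 0 <= W) by (unfold W; pose proof (pos_INR l); nra).
  set (Lx := gamma * GT + W + Rabs D).
  assert (HLx : 0 <= Lx) by (unfold Lx; pose proof (Rabs_pos D); nra).
  destruct (Htheta j Hj) as [Hth0 Hth1].
  assert (Hdj := Hdelta j Hj). assert (Haj := Halpha j Hj).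
  set (cc := alpha j + delta j / theta j).
  assert (Hcc : 0 < cc). { unfold cc. assert (0 < delta j / theta j) by (apply Rdiv_lt_0_compat; lra). lra. }
  assert (Heta : forall u, t0 <= u < T -> eta j t0 <= eta j u * exp (cc * (u - t0))).
  { intros u Hu.
    set (ex := fun v => exp (cc * (v - t0))).
    set (Deta := fun v => - alpha j * eta j v - delta j *
      (beta j * fsum r (fun c => Rabs (z j c v + phi j c v - xh j c v)) -
       fsum r (fun c => input_w n l src dst kh xh v j c * (z j c v + phi j c v - xh j c v)))).
    assert (H := mono (fun v => - (eta j v * ex v)) (fun v => - (Deta v * ex v + eta j v * (cc * ex v))) t0 u (is_event_time n tau)).
    assert (Hex0 : ex t0 = 1) by (unfold ex; replace (cc * (t0 - t0)) with 0 by ring; apply exp_0).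
    cut (- (eta j u * ex u) <= - (eta j t0 * ex t0)). rewrite Hex0; unfold ex; lra.
    apply H; clear H.
    - lra.
    - apply ccont_ext with (fun v => (-1) * (eta j v * ex v)). intros; ring. apply ccont_scal. apply ccont_mult.
      apply (ccont_of_Ico _ t0 T0); auto; lra. apply ccont_of_cont. intros t. apply derivable_continuous_pt.
      exists (cc * ex t). apply expderiv.
    - intros t Ht; apply Hfree; lra.
    - intros v Hv Hnv. destruct (Hder v ltac:(lra) Hnv) as [Dz [Dk De]]. split.
      + apply (derivable_pt_lim_opp (fun v => eta j v * ex v)).
        apply (derivable_pt_lim_mult (eta j) ex). apply De; auto. apply expderiv.
      + destruct (Hgood j v Hj ltac:(lra)) as [K HK].
        destruct (seq_search (tau j) v K) as [k [Hk1 Hk2]]. intros; auto. rewrite Htau0 by auto; lra. auto.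
        assert (Hk3 : tau j k < v). { destruct Hk1 as [|Heq]; auto. exfalso; apply Hnv. exists j, k; auto. }
        assert (Htr := Htra j k v Hj ltac:(lra) ltac:(lra)).
        assert (EQ : Deta v = - alpha j * eta j v - delta j *
          (beta j * fsum r (fun c => Rabs (z j c v + phi j c v - (z j c (tau j k) + phi j c (tau j k)))) -
           fsum r (fun c => input_w n l src dst kh xh v j c * (z j c v + phi j c v - (z j c (tau j k) + phi j c (tau j k)))))).
        { unfold Deta. f_equal. f_equal. f_equal. f_equal. apply fsum_ext. intros c Hc. rewrite (Hxh j k c v); auto; lra.
          apply fsum_ext. intros c Hc. rewrite (Hxh j k c v); auto; lra. }
        rewrite EQ. clear EQ.
        set (Q := beta j * fsum r (fun c => Rabs (z j c v + phi j c v - (z j c (tau j k) + phi j c (tau j k)))) -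
           fsum r (fun c => input_w n l src dst kh xh v j c * (z j c v + phi j c v - (z j c (tau j k) + phi j c (tau j k))))).
        fold Q in Htr.
        assert (Hpos : 0 <= - alpha j * eta j v - delta j * Q + eta j v * cc).
        { replace (- alpha j * eta j v - delta j * Q + eta j v * cc) with (delta j * ((eta j v - theta j * Q) / theta j)).
          apply Rmult_le_pos. lra. left; apply Rdiv_lt_0_compat; lra. unfold cc. field. lra. }
        assert (0 < ex v) by apply exp_pos. nra. }
  set (m := eta j t0 * exp (- cc * (T - t0))).
  assert (Hm0 : 0 < m) by (unfold m; apply Rmult_lt_0_compat; [apply He0; auto | apply exp_pos]).
  assert (Hm : forall u, t0 <= u < T -> m <= eta j u).
  { intros u Hu. specialize (Heta u Hu). unfold m.
    assert (exp (- cc * (T - t0)) <= exp (- cc * (u - t0))).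
    { destruct (Req_dec u T). lra. left. apply exp_increasing. nra. }
    assert (E : eta j u = eta j u * exp (cc * (u - t0)) * exp (- cc * (u - t0))).
    { rewrite Rmult_assoc, <- exp_plus. replace (cc * (u - t0) + - cc * (u - t0)) with 0 by ring. rewrite exp_0; ring. }
    rewrite E. pose proof (He0 j Hj). apply Rle_trans with (eta j t0 * exp (- cc * (u - t0))).
    apply Rmult_le_compat_l; lra. apply Rmult_le_compat_r. left; apply exp_pos. auto. }
  assert (HLip : forall a t c, t0 <= a <= t -> t < T -> (c < r)%nat ->
     Rabs (z j c t + phi j c t - (z j c a + phi j c a)) <= Lx * (t - a)).
  { intros a t c Ha Ht Hc. apply Rnot_lt_le. intro Hlt.
    set (eps := Rabs (z j c t + phi j c t - (z j c a + phi j c a)) - Lx * (t - a)).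
    assert (Heps : 0 < eps) by (unfold eps; lra).
    assert (Hphic : forall t', continuity_pt (phi j c) t').
    { intros t'. exact (derivable_continuous_pt _ _ (exist _ _ (Hdphi j c t' Hj Hc))). }
    assert (H := abs_mono (fun u => z j c u + phi j c u - (z j c a + phi j c a))
        (fun u => - gamma * z j c u - input_w n l src dst kh xh u j c + dphi j c u)
        (fun u => Lx * (u - a) + eps) (fun _ => Lx) a t (is_event_time n tau)).
    assert (Rabs (z j c t + phi j c t - (z j c a + phi j c a)) < Lx * (t - a) + eps).
    2:{ unfold eps in *; lra. }
    apply H; clear H.
    - lra.
    - apply ccont_minus. apply ccont_plus. apply (ccont_of_Ico _ t0 T0); auto; lra.
      apply ccont_of_cont; auto. apply ccont_of_cont; intros; apply continuity_pt_const; intros ? ?; auto.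
    - apply ccont_of_cont. intros t'. apply derivable_continuous_pt. exists Lx. apply lin_deriv.
    - intros t' Ht'; apply Hfree; lra.
    - intros v Hv Hnv. destruct (Hder v ltac:(lra) Hnv) as [Dz [Dk De]]. split; [|split].
      + replace (- gamma * z j c v - input_w n l src dst kh xh v j c + dphi j c v) with
          ((- gamma * z j c v - input_w n l src dst kh xh v j c + dphi j c v) - 0) by ring.
        apply (derivable_pt_lim_minus (fun u => z j c u + phi j c u) (fct_cte (z j c a + phi j c a))).
        apply (derivable_pt_lim_plus (z j c) (phi j c)); auto. apply derivable_pt_lim_const.
      + apply lin_deriv.
      + destruct (HB v ltac:(lra)) as [Hz Hw]. specialize (Hz j c Hj Hc). specialize (Hw j c Hc).
        assert (Rabs (dphi j c v) <= Rabs D). { eapply Rle_trans. apply HD; auto; lra. apply Rle_abs. }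
        eapply Rle_trans. apply Rabs_triang. eapply Rle_trans. apply Rplus_le_compat_r. apply Rabs_triang.
        rewrite Rabs_Ropp, Rabs_mult, Rabs_Ropp, (Rabs_right gamma) by lra.
        assert (gamma * Rabs (z j c v) <= gamma * GT) by (apply Rmult_le_compat_l; lra).
        unfold Lx, W. lra.
    - rewrite Rabs_right. lra. replace (z j c a + phi j c a - (z j c a + phi j c a)) with 0 by ring. lra. }
  set (K := (Rabs (beta j) + W) * (INR r * Lx)).
  assert (HK : 0 <= K). { unfold K. pose proof (Rabs_pos (beta j)). pose proof (pos_INR r).
    apply Rmult_le_pos. lra. apply Rmult_le_pos; lra. }
  set (ep := m / (2 * (theta j * K + 1))).
  assert (Hep : 0 < ep). { unfold ep. apply Rdiv_lt_0_compat. lra. nra. }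
  assert (HthKe : theta j * K * ep < m / 2).
  { unfold ep. apply Rmult_lt_reg_r with (2 * (theta j * K + 1)). nra.
    field_simplify; try nra. }
  destruct (Happ ep Hep) as [k Hk].
  assert (Hb := Hbel (S k)). assert (Hab := Hinc j k Hj).
  assert (Hta := Htge j k Hj).
  set (e := Rmin (tau j (S k) - tau j k) (m / 2)).
  assert (He : 0 < e) by (unfold e; apply Rmin_pos; lra).
  assert (He1 : e <= tau j (S k) - tau j k) by apply Rmin_l.
  assert (He2 : e <= m / 2) by apply Rmin_r.
  destruct (Htrb j k Hj ltac:(lra) e He) as [t [Ht Hq]].
  assert (Hmt := Hm t ltac:(lra)).
  set (a := tau j k) in *.
  set (Sabs := fsum r (fun c => Rabs (z j c t + phi j c t - (z j c a + phi j c a)))).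
  assert (HS0 : 0 <= Sabs).
  { unfold Sabs. rewrite <- (Rmult_0_r (INR r)), <- fsum_const. apply fsum_le. intros; apply Rabs_pos. }
  assert (HS1 : Sabs <= INR r * (Lx * (t - a))).
  { unfold Sabs. rewrite <- fsum_const. apply fsum_le. intros c Hc. apply HLip; auto; lra. }
  assert (HW2 : Rabs (fsum r (fun c => input_w n l src dst kh xh t j c * (z j c t + phi j c t - (z j c a + phi j c a)))) <= W * Sabs).
  { eapply Rle_trans. apply fsum_abs. unfold Sabs. rewrite <- fsum_scal. apply fsum_le. intros c Hc.
    rewrite Rabs_mult. apply Rmult_le_compat_r. apply Rabs_pos. destruct (HB t ltac:(lra)) as [_ Hw]. apply Hw; auto. }
  set (Wsum := fsum r (fun c => input_w n l src dst kh xh t j c * (z j c t + phi j c t - (z j c a + phi j c a)))) in *.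
  assert (HQ : beta j * Sabs - Wsum <= (Rabs (beta j) + W) * Sabs).
  { pose proof (Rle_abs (- Wsum)). rewrite Rabs_Ropp in H.
    assert (beta j * Sabs <= Rabs (beta j) * Sabs) by (apply Rmult_le_compat_r; auto; apply Rle_abs). nra. }
  assert (HQ2 : (Rabs (beta j) + W) * Sabs <= K * ep).
  { unfold K. pose proof (Rabs_pos (beta j)). pose proof (pos_INR r).
    rewrite Rmult_assoc. apply Rmult_le_compat_l. lra. eapply Rle_trans. apply HS1.
    rewrite Rmult_assoc. apply Rmult_le_compat_l. auto. apply Rmult_le_compat_l. auto. lra. }
  assert (theta j * (beta j * Sabs - Wsum) <= theta j * K * ep).
  { rewrite Rmult_assoc. apply Rmult_le_compat_l. lra. lra. }
  unfold Sabs, Wsum in *. lra.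
Qed.
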